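(* Let $[R_1,\dots,R_L]$ be the rule vector of a one-dimensional linear null hybrid 90/150 cellular automaton and let $P_i(x)=\sum_j c^{(i)}_j x^j$ denote the characteristic polynomial of the sub-automaton $R_1R_2\cdots R_i$. For any evolution of the automaton, write $z_t=x_1^t$ for the sequence in the leftmost cell. Then for every $1\le i\le L$ and every $t$, $$x_i^t=\sum_j c^{(i-1)}_j\, z_{t+j}.$$ Consequently, if the cell-$i$ sequence $\{x_i^t\}$ is in turn placed as the leftmost-cell sequence of the same automaton and this is repeated, then after $n$ such steps the sequence obtained at cell $i$ is $\sum_j d_j z_{t+j}$, where $P_{i-1}(x)^n=\sum_j d_j x^j$ (coefficients in $GF(2)$). *)

(* Defs.v *)
From HB Require Import structures.
From mathcomp Require Import all_boot all_order all_algebra.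
Set Implicit Arguments. Unset Strict Implicit. Unset Printing Implicit Defensive.
Import GRing.Theory.
Local Open Scope ring_scope.

(* A rule vector [R_1,...,R_L] is a [seq bool] of length L;
   [true] = rule 150, [false] = rule 90.  Cells are numbered 1..L. *)

Definition rule_coef (R : seq bool) (i : nat) : 'F_2 := (nth false R i.-1)%:R.

Definition cell (L : nat) (s : nat -> 'F_2) (i : nat) : 'F_2 :=
  if (1 <= i <= L)%N then s i else 0.

(* x t i = state x_i^t of cell i at time t *)
Definition is_evolution (R : seq bool) (x : nat -> nat -> 'F_2) : Prop :=
  forall (t i : nat), (1 <= i <= size R)%N ->
    x t.+1 i = cell (size R) (x t) i.-1 + rule_coef R i * x t i
               + cell (size R) (x t) i.+1.

(* transition matrix of the null-boundary sub-automaton R_1 ... R_m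
   (0-indexed rows/cols; row j corresponds to cell j+1) *)
Definition trans_mx (R : seq bool) (m : nat) : 'M['F_2]_m :=
  \matrix_(j, k) (if j == k then rule_coef R j.+1
                  else if (j.+1 == k :> nat) || (k.+1 == j :> nat) then 1 else 0).

Definition charP (R : seq bool) (m : nat) : {poly 'F_2} := char_poly (trans_mx R m).

(* Main.v *)
Require Import Defs.
From HB Require Import structures.
From mathcomp Require Import all_boot all_order all_algebra.
Set Implicit Arguments. Unset Strict Implicit. Unset Printing Implicit Defensive.
Import GRing.Theory.
Local Open Scope ring_scope.

Lemma c2F : 2 \in [pchar 'F_2]. Proof. exact: pchar_Fp. Qed.
Lemma c2P : 2 \in [pchar {poly 'F_2}]. Proof. by rewrite pchar_poly c2F. Qed.
Lemma oppF (a : 'F_2) : - a = a. Proof. exact: oppr_pchar2 c2F a. Qed.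
Lemma oppP (a : {poly 'F_2}) : - a = a. Proof. exact: oppr_pchar2 c2P a. Qed.

Definition T (R : seq bool) (j k : nat) : {poly 'F_2} :=
  if j == k then 'X - (rule_coef R j.+1)%:P
  else if (j.+1 == k) || (k.+1 == j) then -1 else 0.

Lemma cpmxE R m (j k : 'I_m) : char_poly_mx (trans_mx R m) j k = T R j k.
Proof.
rewrite /char_poly_mx /T !mxE.
case: (j =P k) => [->|/eqP jk]; first by rewrite eqxx mulr1n.
rewrite mulr0n sub0r.
have -> : (j == k :> nat) = false by apply/negbTE.
by case: ifP; rewrite ?rmorph1 ?rmorph0 ?oppr0.
Qed.

Lemma rcE (K : Type) n (A : 'M[K]_n.+1) i k j l :
  row' i (col' k A) j l = A (lift i j) (lift k l).
Proof. by rewrite !mxE. Qed.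

Lemma charP_rec R m : charP R m.+2 =
  ('X + (rule_coef R m.+2)%:P) * charP R m.+1 + charP R m.
Proof.
rewrite /charP /char_poly (expand_det_row _ ord_max) !big_ord_recr /=.
rewrite big1 ?add0r => [|j _]; last first.
  rewrite cpmxE /T /=; have hj := ltn_ord j.
  have h1 : (m.+1 == j) = false by rewrite gtn_eqF // ltnW.
  have h2 : ((m.+2 == j) || (j.+1 == m.+1)) = false.
    by rewrite eqSS (ltn_eqF hj) gtn_eqF // ltnW // ltnW.
  by rewrite h1 h2 mul0r.
rewrite !cpmxE /T /= eqxx ifF ?eqxx ?orbT; last by rewrite gtn_eqF.
rewrite /cofactor !oppP !expr1n !mul1r addrC.
congr (_ * _ + _).
  congr (\det _); apply/matrixP => j k; by rewrite rcE !cpmxE !lift_max.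
rewrite (expand_det_col _ ord_max) big_ord_recr /= big1 ?add0r => [|j _]; last first.
  rewrite rcE cpmxE /T /=.
  have hj := ltn_ord j.
  have h0 : (m.+1 <= j)%N = false by rewrite leqNgt ltnW.
  rewrite /bump leqnn h0 add0n add1n.
  have h1 : (j == m.+1 :> nat) = false by rewrite ltn_eqF // ltnW.
  have h2 : ((j.+1 == m.+1) || (m.+2 == j :> nat)) = false.
    by rewrite eqSS (ltn_eqF hj) gtn_eqF // ltnW // ltnW.
  by rewrite h1 h2 mul0r.
rewrite /cofactor !oppP !expr1n !mul1r rcE cpmxE /T /= /bump leqnn !ltnn add0n add1n.
rewrite (ltn_eqF (ltnSn m)) eqxx /= oppP mul1r.
congr (\det _); apply/matrixP => j k; rewrite !rcE !cpmxE /=.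
have bj h (i : nat) : (i < h)%N -> bump h i = i.
  by move=> hi; rewrite /bump leqNgt hi.
have hj := ltn_ord j; have hk := ltn_ord k.
by rewrite !bj // ltnW.
Qed.

Lemma charP0 R : charP R 0 = 1.
Proof. by rewrite /charP /char_poly det_mx00. Qed.

Lemma charP1 R : charP R 1 = 'X + (rule_coef R 1)%:P.
Proof. by rewrite /charP /char_poly det_mx11 cpmxE /T /= oppP. Qed.

Definition op (p : {poly 'F_2}) (f : nat -> 'F_2) (t : nat) : 'F_2 :=
  \sum_(j < size p) p`_j * f (t + j)%N.

Lemma op_wide (p : {poly 'F_2}) (f : nat -> 'F_2) t N : (size p <= N)%N ->
  op p f t = \sum_(j < N) p`_j * f (t + j)%N.
Proof.
move=> hN; rewrite /op (big_ord_widen _ (fun j => p`_j * f (t + j)%N) hN).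
rewrite big_mkcond /=; apply: eq_bigr => j _.
by case: ifP => // /negbT; rewrite -leqNgt => /(nth_default 0) ->; rewrite mul0r.
Qed.

Lemma op_ext p f g t : (forall s, f s = g s) -> op p f t = op p g t.
Proof. by move=> e; apply: eq_bigr => j _; rewrite e. Qed.

Lemma op_add p q f t : op (p + q) f t = op p f t + op q f t.
Proof.
rewrite !(@op_wide _ _ _ (maxn (size p) (size q))) ?leq_maxl ?leq_maxr ?size_polyD //.
by rewrite -big_split; apply: eq_bigr => j _; rewrite coefD mulrDl.
Qed.

Lemma op_C c f t : op c%:P f t = c * f t.
Proof.
by rewrite (@op_wide _ _ _ 1) ?size_polyC_leq1 // big_ord1 coefC /= addn0.
Qed.

Lemma op_CM c p f t : op (c%:P * p) f t = c * op p f t.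
Proof.
rewrite !(@op_wide _ _ _ (size p)) ?mulr_sumr //; last first.
  by rewrite mul_polyC size_scale_leq.
by apply: eq_bigr => j _; rewrite coefCM mulrA.
Qed.

Lemma op_Xq q f t : op ('X * q) f t = op q f t.+1.
Proof.
rewrite (@op_wide _ _ _ (size q).+1); last first.
  by apply: leq_trans (size_polyMleq _ _) _; rewrite size_polyX.
rewrite big_ord_recl coefXM /= mul0r add0r /op; apply: eq_bigr => j _.
by rewrite coefXM /= addnS addSn.
Qed.

Lemma op_shift p g t : op p g t.+1 = op p (fun s => g s.+1) t.
Proof. by apply: eq_bigr => j _; rewrite addSn. Qed.

Lemma op_mul p q f t : op (p * q) f t = op p (op q f) t.
Proof.
elim/poly_ind: p q f t => [|p c IH] q f t.
  by rewrite mul0r /op size_poly0 !big_ord0.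
rewrite mulrDl -mulrA (mulrC 'X) op_add IH op_CM op_add op_C.
congr (_ + _); rewrite [q * 'X]mulrC [p * 'X]mulrC op_Xq op_shift.
by apply: op_ext => s; rewrite op_Xq.
Qed.

Lemma op_1 f t : op 1 f t = f t.
Proof. by rewrite -[1]/(1%:P) op_C mul1r. Qed.

Lemma op_X f t : op 'X f t = f t.+1.
Proof. by rewrite -['X]mulr1 op_Xq op_1. Qed.

Lemma solveF (a b c d : 'F_2) : a = b + c + d -> d = a + b + c.
Proof.
have xx (y : 'F_2) : y + y = 0 by rewrite -{2}(oppF y) subrr.
move=> ->; rewrite -(addrA (b + c + d)) (addrC (b + c) d) -addrA xx addr0 //.
Qed.

Lemma part1 R x : is_evolution R x -> forall k, (k.+1 <= size R)%N ->
  (forall t, x t k.+1 = op (charP R k) (fun s => x s 1%N) t) /\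
  ((k.+2 <= size R)%N -> forall t, x t k.+2 = op (charP R k.+1) (fun s => x s 1%N) t).
Proof.
move=> ev; elim=> [|k IH] hk.
  split=> [t|h2 t]; first by rewrite charP0 op_1.
  have := ev t 1%N hk; rewrite /cell /= h2 => /solveF ->.
  by rewrite charP1 op_add op_X op_C addr0.
have [_ IH2] := IH (ltnW hk).
split=> [|h3 t]; first exact: IH2.
have := ev t k.+2 hk; rewrite /cell /= h3 (ltnW hk) => /solveF ->.
rewrite charP_rec op_add op_mul op_add op_X op_C.
rewrite -!IH2 // -(IH (ltnW hk)).1.
by rewrite addrAC.
Qed.
Local Open Scope ring_scope.

Theorem mainTheorem6 (R : seq bool) (x : nat -> nat -> 'F_2) :
  is_evolution R x ->
  (forall (i t : nat), (1 <= i <= size R)%N ->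
     x t i = \sum_(j < size (charP R i.-1)) (charP R i.-1)`_j * x (t + j)%N 1%N)
  /\
  (forall (i n : nat) (e : nat -> nat -> nat -> 'F_2),
     (1 <= i <= size R)%N -> (1 <= n)%N ->
     (forall k, (1 <= k <= n)%N -> is_evolution R (e k)) ->
     (forall t, e 1%N t 1%N = x t 1%N) ->
     (forall k t, (1 <= k < n)%N -> e k.+1 t 1%N = e k t i) ->
     forall t, e n t i =
       \sum_(j < size (charP R i.-1 ^+ n)) (charP R i.-1 ^+ n)`_j * x (t + j)%N 1%N).
Proof.
move=> ev.
have P1 y : is_evolution R y -> forall i t, (1 <= i <= size R)%N ->
    y t i = op (charP R i.-1) (fun s => y s 1%N) t.
  move=> ey [|k] t /andP[] // _ hk; exact: ((part1 ey hk).1 t).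
split; first by move=> i t hi; exact: P1.
move=> i n e hi hn he h1 hs.
suff H : forall k, (1 <= k <= n)%N -> forall t,
    e k t i = op (charP R i.-1 ^+ k) (fun s => x s 1%N) t.
  by move=> t; rewrite H ?hn ?leqnn.
elim=> [|k IHk] // /andP[_ hkn] t.
rewrite (P1 _ (he k.+1 _)) ?hkn //.

move: IHk hkn; case: k => [|k] IHk hkn.
  by rewrite GRing.expr1; apply: op_ext => s; exact: h1.
rewrite GRing.exprS op_mul; apply: op_ext => s.
rewrite hs ?hkn //; apply: IHk; exact: ltnW.
Qed.
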